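(* Let $k^0_{rw},k^0_{rg},\mu_w,\mu_g,f_{mmob},\mathrm{epdry}>0$, let $n_w,n_g\ge 2$, $S_{wc},S_{gr}\ge0$ with $S_{wc}+S_{gr}<1$, $\mathrm{fmdry}\in\mathbb{R}$, and take $\mathrm{fmsurf}=C_{\max}$ and $\mathrm{epsurf}=1$. For $(S,C)\in[0,1]^2$ define $S_w=S_{wc}+S(1-S_{wc}-S_{gr})$, $$k_{rw}(S)=k^0_{rw}S^{n_w},\quad k_{rg}(S)=k^0_{rg}(1-S)^{n_g},\quad F_2(S)=\tfrac12+\tfrac1\pi\arctan\big(\mathrm{epdry}(S_w-\mathrm{fmdry})\big),$$ $$k^f_{rg}(S,C)=\frac{k_{rg}(S)}{1+f_{mmob}\,C\,F_2(S)},\qquad f(S,C)=\frac{k_{rw}(S)}{k_{rw}(S)+(\mu_w/\mu_g)\,k^f_{rg}(S,C)}.$$ Then $f\in\mathscr{C}^2([0,1]^2)$, $f(0,C)=0$, $f(1,C)=1$ and $\partial_Sf(0,C)=\partial_Sf(1,C)=0$ for every $C\in[0,1]$; moreover $\partial_Sf(S,C)>0$ and $\partial_Cf(S,C)>0$ for all $S\in(0,1)$, $C\in[0,1]$.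
   Context: This is the (normalized) water fractional flow function of the CMG-STARS local-equilibrium foam model: $S$ is normalized water saturation, $C=C_s^w/C_{\max}$ normalized surfactant concentration; with $\mathrm{fmsurf}=C_{\max}$, $\mathrm{epsurf}=1$ the surfactant factor $F_1$ equals $C$ on $[0,1]$, and the foam mobility reduction factor is $FM=(1+f_{mmob}F_1F_2)^{-1}$. *)

(* Defs.v *)
From Stdlib Require Import Reals Lra.
From Coquelicot Require Import Coquelicot.
Open Scope R_scope.

(* Real power with the convention x^y = 0 for x <= 0 (used only for x in [0,1]
   and y >= 2 > 0, where 0^y = 0 is the correct value). *)
Definition rpow (x y : R) : R := if Rle_dec x 0 then 0 else Rpower x y.

Definition I01 (x : R) : Prop := 0 <= x <= 1.

(* Derivative of g at x within the set D (one-sided at endpoints of [0,1]). *)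
Definition is_deriv_within (D : R -> Prop) (g : R -> R) (x l : R) : Prop :=
  filterlim (fun t => (g t - g x) / (t - x))
    (within (fun t => D t /\ t <> x) (locally x)) (locally l).

Definition dS (f : R -> R -> R) (S C l : R) : Prop :=
  is_deriv_within I01 (fun t => f t C) S l.
Definition dC (f : R -> R -> R) (S C l : R) : Prop :=
  is_deriv_within I01 (fun c => f S c) C l.

Definition cont_on_square (g : R -> R -> R) : Prop :=
  forall S C, I01 S -> I01 C ->
    filterlim (fun p : R * R => g (fst p) (snd p))
      (within (fun p : R * R => I01 (fst p) /\ I01 (snd p)) (locally (S, C)))
      (locally (g S C)).

Definition C2_on_unit_square (f : R -> R -> R) : Prop :=
  exists fS fC fSS fSC fCS fCC : R -> R -> R,
    cont_on_square f /\ cont_on_square fS /\ cont_on_square fC /\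
    cont_on_square fSS /\ cont_on_square fSC /\ cont_on_square fCS /\
    cont_on_square fCC /\
    forall S C, I01 S -> I01 C ->
      dS f S C (fS S C) /\ dC f S C (fC S C) /\
      dS fS S C (fSS S C) /\ dC fS S C (fSC S C) /\
      dS fC S C (fCS S C) /\ dC fC S C (fCC S C).

(* Model ingredients (fmsurf = C_max, epsurf = 1, so F1 = C). *)
Definition Sw (Swc Sgr S : R) : R := Swc + S * (1 - Swc - Sgr).
Definition krw (krw0 nw S : R) : R := krw0 * rpow S nw.
Definition krg (krg0 ng S : R) : R := krg0 * rpow (1 - S) ng.
Definition F2 (epdry fmdry Swc Sgr S : R) : R :=
  / 2 + / PI * atan (epdry * (Sw Swc Sgr S - fmdry)).
Definition krgf (krg0 ng fmmob epdry fmdry Swc Sgr S C : R) : R :=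
  krg krg0 ng S / (1 + fmmob * C * F2 epdry fmdry Swc Sgr S).
Definition fracflow (krw0 krg0 muw mug nw ng fmmob epdry fmdry Swc Sgr : R)
  (S C : R) : R :=
  krw krw0 nw S /
    (krw krw0 nw S + (muw / mug) * krgf krg0 ng fmmob epdry fmdry Swc Sgr S C).

(* Main.v *)
Require Import Defs.
From Stdlib Require Import Reals Lra Classical FunctionalExtensionality.
From Coquelicot Require Import Coquelicot.
Open Scope R_scope.

Section Lims.
Context {T : Type} {F : (T -> Prop) -> Prop} {FF : Filter F}.

Lemma lim_plus (a b : T -> R) la lb :
  filterlim a F (locally la) -> filterlim b F (locally lb) ->
  filterlim (fun t => a t + b t) F (locally (la + lb)).
Proof.
intros Ha Hb.
apply (filterlim_comp_2 a b Rplus Ha Hb).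
exact (@filterlim_plus _ R_NormedModule la lb).
Qed.

Lemma lim_mult (a b : T -> R) la lb :
  filterlim a F (locally la) -> filterlim b F (locally lb) ->
  filterlim (fun t => a t * b t) F (locally (la * lb)).
Proof.
intros Ha Hb.
apply (filterlim_comp_2 a b Rmult Ha Hb).
exact (@filterlim_mult R_AbsRing la lb).
Qed.

Lemma lim_inv (a : T -> R) la :
  la <> 0 -> filterlim a F (locally la) ->
  filterlim (fun t => / a t) F (locally (/ la)).
Proof.
intros Hl Ha.
apply (filterlim_comp _ _ _ a Rinv F (locally la) (locally (/la)) Ha).
apply (filterlim_Rbar_inv (Finite la)).
intro H; apply Hl; injection H; auto.
Qed.
End Lims.

Definition W (D : R -> Prop) (x : R) := within (fun t => D t /\ t <> x) (locally x).

Lemma W_id D x : filterlim (fun t => t) (W D x) (locally x).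
Proof.
intros P HP. unfold W, within, filtermap. apply filter_imp with P; auto.
Qed.

Lemma W_ev D x (P : R -> Prop) : (forall t, D t -> t <> x -> P t) -> W D x P.
Proof.
intros H. unfold W, within. apply filter_forall. intros t [H1 H2]; auto.
Qed.

Lemma deriv_cont D g x l : is_deriv_within D g x l ->
  filterlim g (W D x) (locally (g x)).
Proof.
intros H.
apply filterlim_ext_loc with (fun t => g x + (g t - g x) / (t - x) * (t - x)).
- apply W_ev. intros t _ Ht. field. intro E; apply Ht; lra.
- replace (locally (g x)) with (locally (g x + l * (x + - x))) by (f_equal; ring).
  apply lim_plus. apply filterlim_const.
  apply lim_mult. exact H.
  apply lim_plus. apply W_id.
  apply filterlim_const.
Qed.

Lemma deriv_ext D g h x l : (forall t, D t -> g t = h t) -> D x ->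
  is_deriv_within D g x l -> is_deriv_within D h x l.
Proof.
intros E Dx H. unfold is_deriv_within in *.
apply filterlim_ext_loc with (2 := H). apply W_ev. intros t Dt _.
rewrite !E; auto.
Qed.

Lemma deriv_const D c x : is_deriv_within D (fun _ => c) x 0.
Proof.
unfold is_deriv_within.
apply filterlim_ext_loc with (fun _ => 0). apply W_ev. intros t _ Ht.
field. intro E; apply Ht; lra. apply filterlim_const.
Qed.

Lemma deriv_id D x : is_deriv_within D (fun t => t) x 1.
Proof.
unfold is_deriv_within.
apply filterlim_ext_loc with (fun _ => 1). apply W_ev. intros t _ Ht.
field. intro E; apply Ht; lra. apply filterlim_const.
Qed.

Lemma deriv_plus D g h x lg lh : is_deriv_within D g x lg -> is_deriv_within D h x lh ->
  is_deriv_within D (fun t => g t + h t) x (lg + lh).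
Proof.
intros Hg Hh. unfold is_deriv_within in *.
apply filterlim_ext_loc with (fun t => (g t - g x) / (t - x) + (h t - h x) / (t - x)).
apply W_ev. intros t _ Ht. field. intro E; apply Ht; lra.
apply lim_plus; auto.
Qed.

Lemma deriv_mult D g h x lg lh : is_deriv_within D g x lg -> is_deriv_within D h x lh ->
  is_deriv_within D (fun t => g t * h t) x (lg * h x + g x * lh).
Proof.
intros Hg Hh. pose proof (deriv_cont _ _ _ _ Hh) as Ch. unfold is_deriv_within in *.
apply filterlim_ext_loc with (fun t => (g t - g x) / (t - x) * h t + g x * ((h t - h x) / (t - x))).
apply W_ev. intros t _ Ht. field. intro E; apply Ht; lra.
apply lim_plus; apply lim_mult; auto. apply filterlim_const.
Qed.

Lemma deriv_inv D g x lg : (forall t, D t -> g t <> 0) -> D x ->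
  is_deriv_within D g x lg ->
  is_deriv_within D (fun t => / g t) x (- lg * / (g x * g x)).
Proof.
intros Hn Dx Hg. pose proof (deriv_cont _ _ _ _ Hg) as Cg. unfold is_deriv_within in *.
apply filterlim_ext_loc with (fun t => - ((g t - g x) / (t - x)) * / (g t * g x)).
apply W_ev. intros t Dt Ht. field. split. apply Hn; auto. split. apply Hn; auto.
intro E; apply Ht; lra.
apply lim_mult. 
replace (- lg) with (-1 * lg) by ring.
apply filterlim_ext with (fun t => -1 * ((g t - g x) / (t - x))). intros; ring.
apply lim_mult; auto. apply filterlim_const.
apply lim_inv. apply Rmult_integral_contrapositive; split; apply Hn; auto.
apply lim_mult; auto. apply filterlim_const.
Qed.

Definition Sq S C := within (fun p : R * R => I01 (fst p) /\ I01 (snd p)) (locally (S, C)).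
Definition cont1 (u : R -> R) := forall x, I01 x ->
  filterlim u (within I01 (locally x)) (locally (u x)).

Lemma cont_plus g h : cont_on_square g -> cont_on_square h ->
  cont_on_square (fun S C => g S C + h S C).
Proof. intros Hg Hh S C HS HC. apply lim_plus; auto. Qed.

Lemma cont_mult g h : cont_on_square g -> cont_on_square h ->
  cont_on_square (fun S C => g S C * h S C).
Proof. intros Hg Hh S C HS HC. apply lim_mult; auto. Qed.

Lemma cont_inv g : cont_on_square g -> (forall S C, I01 S -> I01 C -> g S C <> 0) ->
  cont_on_square (fun S C => / g S C).
Proof. intros Hg Hn S C HS HC. apply lim_inv; auto. Qed.

Lemma cont_const c : cont_on_square (fun _ _ => c).
Proof. intros S C HS HC. apply filterlim_const. Qed.

Lemma cont_snd : cont_on_square (fun _ C => C).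
Proof.
intros S C HS HC P [eps HP]. unfold within. exists eps. intros p [_ Hp] _. apply HP, Hp.
Qed.

Lemma cont_fst u : cont1 u -> cont_on_square (fun S _ => u S).
Proof.
intros Hu S C HS HC. simpl.
apply (filterlim_comp _ _ _ fst u _ (within I01 (locally S))); [|apply Hu; auto].
intros P [eps HP]. exists eps. intros p [Hp _] [H1 _]. apply HP; auto.
Qed.

Definition D1 (g gS gC : R -> R -> R) :=
  cont_on_square g /\ cont_on_square gS /\ cont_on_square gC /\
  forall S C, I01 S -> I01 C -> dS g S C (gS S C) /\ dC g S C (gC S C).
Definition C1 g := exists gS gC, D1 g gS gC.
Definition C2 g := exists gS gC, D1 g gS gC /\ C1 gS /\ C1 gC.

Lemma C2_ok g : C2 g -> C2_on_unit_square g.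
Proof.
intros (gS & gC & (H1 & H2 & H3 & H4) & (gSS & gSC & (_ & H5 & H6 & H7)) & (gCS & gCC & (_ & H8 & H9 & H10))).
exists gS, gC, gSS, gSC, gCS, gCC. repeat split; auto;
 try apply H4; try apply H7; try apply H10; auto.
Qed.

Lemma D1_plus g gS gC h hS hC : D1 g gS gC -> D1 h hS hC ->
  D1 (fun S C => g S C + h S C) (fun S C => gS S C + hS S C) (fun S C => gC S C + hC S C).
Proof.
intros (a1&a2&a3&a4) (b1&b2&b3&b4). repeat split; try apply cont_plus; auto;
 [apply deriv_plus; [apply a4|apply b4]; auto | apply deriv_plus; [apply a4|apply b4]; auto].
Qed.

Lemma D1_mult g gS gC h hS hC : D1 g gS gC -> D1 h hS hC ->
  D1 (fun S C => g S C * h S C) (fun S C => gS S C * h S C + g S C * hS S C)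
     (fun S C => gC S C * h S C + g S C * hC S C).
Proof.
intros (a1&a2&a3&a4) (b1&b2&b3&b4). repeat split;
 try (apply cont_plus; apply cont_mult; auto); try apply cont_mult; auto.
- apply (deriv_mult I01 (fun t => g t C) (fun t => h t C)); [apply a4|apply b4]; auto.
- apply (deriv_mult I01 (fun t => g S t) (fun t => h S t)); [apply a4|apply b4]; auto.
Qed.

Lemma D1_inv g gS gC : D1 g gS gC -> (forall S C, I01 S -> I01 C -> g S C <> 0) ->
  D1 (fun S C => / g S C) (fun S C => - gS S C * / (g S C * g S C))
     (fun S C => - gC S C * / (g S C * g S C)).
Proof.
intros (a1&a2&a3&a4) Hn. repeat split.
- apply cont_inv; auto.
- replace (fun S C => - gS S C * / (g S C * g S C)) with
   (fun S C => (-1 * gS S C) * / (g S C * g S C)) by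
   (do 2 (apply functional_extensionality; intro); ring).
  apply cont_mult. apply cont_mult; auto. apply cont_const.
  apply cont_inv. apply cont_mult; auto. intros; apply Rmult_integral_contrapositive; split; auto.
- replace (fun S C => - gC S C * / (g S C * g S C)) with
   (fun S C => (-1 * gC S C) * / (g S C * g S C)) by
   (do 2 (apply functional_extensionality; intro); ring).
  apply cont_mult. apply cont_mult; auto. apply cont_const.
  apply cont_inv. apply cont_mult; auto. intros; apply Rmult_integral_contrapositive; split; auto.
- apply (deriv_inv I01 (fun t => g t C)); [intros t Ht; apply Hn; auto | auto | apply a4; auto].
- apply (deriv_inv I01 (fun t => g S t)); [intros t Ht; apply Hn; auto | auto | apply a4; auto].
Qed.

Lemma D1_const c : D1 (fun _ _ => c) (fun _ _ => 0) (fun _ _ => 0).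
Proof. split; [|split; [|split]]; try apply cont_const. intros S C _ _; split; unfold dS, dC; simpl; [exact (deriv_const _ _ _)|exact (deriv_const _ _ _)]. Qed.

Lemma D1_snd : D1 (fun _ C => C) (fun _ _ => 0) (fun _ _ => 1).
Proof. split; [|split; [|split]]; try apply cont_const; try apply cont_snd.
intros S C _ _; split; unfold dS, dC; simpl. exact (deriv_const _ _ _). exact (deriv_id _ _). Qed.

Lemma D1_fst u u' : cont1 u -> cont1 u' -> (forall x, I01 x -> is_deriv_within I01 u x (u' x)) ->
  D1 (fun S _ => u S) (fun S _ => u' S) (fun _ _ => 0).
Proof.
intros H1 H2 H3. split; [|split; [|split]]; [apply cont_fst; auto|apply cont_fst; auto|apply cont_const|].
intros S C HS _; split; unfold dS, dC; simpl. exact (H3 S HS). exact (deriv_const _ _ _).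
Qed.

Lemma C1_plus g h : C1 g -> C1 h -> C1 (fun S C => g S C + h S C).
Proof. intros (?&?&A) (?&?&B). eexists; eexists; apply D1_plus; eauto. Qed.
Lemma C1_mult g h : C1 g -> C1 h -> C1 (fun S C => g S C * h S C).
Proof. intros (?&?&A) (?&?&B). eexists; eexists; apply D1_mult; eauto. Qed.
Lemma C1_inv g : C1 g -> (forall S C, I01 S -> I01 C -> g S C <> 0) -> C1 (fun S C => / g S C).
Proof. intros (?&?&A) N. eexists; eexists; apply D1_inv; eauto. Qed.
Lemma C1_const c : C1 (fun _ _ => c).
Proof. eexists; eexists; apply D1_const. Qed.
Lemma C1_opp g : C1 g -> C1 (fun S C => - g S C).
Proof.
intros G. replace (fun S C => - g S C) with (fun S C => (fun _ _ => -1) S C * g S C).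
apply C1_mult; auto. apply C1_const.
do 2 (apply functional_extensionality; intro); ring.
Qed.
Lemma C1_of_C2 g : C2 g -> C1 g.
Proof. intros (?&?&A&_). eexists; eexists; eauto. Qed.

Lemma C2_plus g h : C2 g -> C2 h -> C2 (fun S C => g S C + h S C).
Proof.
intros (?&?&A&A1&A2) (?&?&B&B1&B2). eexists; eexists; split. apply D1_plus; eauto.
split; apply C1_plus; auto.
Qed.
Lemma C2_mult g h : C2 g -> C2 h -> C2 (fun S C => g S C * h S C).
Proof.
intros G H. pose proof (C1_of_C2 _ G) as G'. pose proof (C1_of_C2 _ H) as H'.
destruct G as (?&?&A&A1&A2), H as (?&?&B&B1&B2). eexists; eexists; split. apply D1_mult; eauto.
split; apply C1_plus; apply C1_mult; auto.
Qed.
Lemma C2_inv g : C2 g -> (forall S C, I01 S -> I01 C -> g S C <> 0) -> C2 (fun S C => / g S C).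
Proof.
intros G N. pose proof (C1_of_C2 _ G) as G'.
destruct G as (?&?&A&A1&A2). eexists; eexists; split. apply D1_inv; eauto.
assert (N2 : forall S C, I01 S -> I01 C -> g S C * g S C <> 0).
{ intros; apply Rmult_integral_contrapositive; split; auto. }
split; apply C1_mult; try apply C1_opp; auto; apply C1_inv; auto; apply C1_mult; auto.
Qed.
Lemma C2_const c : C2 (fun _ _ => c).
Proof. eexists; eexists; split. apply D1_const. split; apply C1_const. Qed.
Lemma C2_snd : C2 (fun _ C => C).
Proof. eexists; eexists; split. apply D1_snd. split; apply C1_const. Qed.
Lemma C2_fst u u' u'' : cont1 u -> cont1 u' -> cont1 u'' ->
  (forall x, I01 x -> is_deriv_within I01 u x (u' x)) ->
  (forall x, I01 x -> is_deriv_within I01 u' x (u'' x)) ->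
  C2 (fun S _ => u S).
Proof.
intros. exists (fun S _ => u' S), (fun _ _ => 0). split. apply D1_fst; eauto.
split. exists (fun S _ => u'' S), (fun _ _ => 0); apply D1_fst; eauto. apply C1_const.
Qed.

Lemma ball_R a e b : ball a e b <-> Rabs (b - a) < e.
Proof. unfold ball; simpl; unfold AbsRing_ball, abs, minus, plus, opp; simpl. tauto. Qed.

Lemma deriv_of_dpl (h g : R -> R) x l : I01 x -> derivable_pt_lim h x l ->
  (exists d, 0 < d /\ forall t, I01 t -> Rabs (t - x) < d -> g t = h t) ->
  is_deriv_within I01 g x l.
Proof.
intros Ix Hh (d & Hd & E). unfold is_deriv_within. apply filterlim_locally. intros eps.
destruct (Hh eps (cond_pos eps)) as [del Hdel].
assert (Hm : 0 < Rmin del d) by (apply Rmin_pos; auto; apply cond_pos).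
exists (mkposreal _ Hm). intros t Hb [It Hne]. change R in t. apply ball_R in Hb. simpl in Hb. apply ball_R.
assert (H1 : Rabs (t - x) < d) by (eapply Rlt_le_trans; [exact Hb|apply Rmin_r]).
assert (H2 : Rabs (t - x) < del) by (eapply Rlt_le_trans; [exact Hb|apply Rmin_l]).
rewrite (E t It H1), (E x Ix). 2: { rewrite Rminus_diag, Rabs_R0; auto. }
specialize (Hdel (t - x)). replace (x + (t - x)) with t in Hdel by ring.
apply Hdel; auto. intro Z; apply Hne; lra.
Qed.

Lemma cont_of_cont (h g : R -> R) x : I01 x -> continuous h x ->
  (exists d, 0 < d /\ forall t, I01 t -> Rabs (t - x) < d -> g t = h t) ->
  filterlim g (within I01 (locally x)) (locally (g x)).
Proof.
intros Ix Hh (d & Hd & E).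
rewrite (E x Ix) by (rewrite Rminus_diag, Rabs_R0; auto).
apply filterlim_ext_loc with h.
- unfold within. exists (mkposreal _ Hd). intros t Hb It. apply ball_R in Hb. symmetry; apply E; auto.
- intros P HP. unfold within. apply Hh in HP. unfold filtermap in *. apply filter_imp with (2 := HP). auto.
Qed.

Lemma small_pow c : 0 < c -> forall eps, 0 < eps -> exists d, 0 < d /\
  forall t, 0 < t < d -> Rpower t c < eps.
Proof.
intros Hc eps He. exists (exp (ln eps / c)). split. apply exp_pos.
intros t [H1 H2]. unfold Rpower. rewrite <- (exp_ln eps) by auto. apply exp_increasing.
apply ln_increasing in H2; auto. rewrite ln_exp in H2.
apply (Rmult_lt_compat_l c) in H2; auto. unfold Rdiv in H2.
replace (c * (ln eps * / c)) with (ln eps) in H2 by (field; lra). lra.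
Qed.

Lemma rpow_pos x c : 0 < x -> rpow x c = Rpower x c.
Proof. intros; unfold rpow; destruct (Rle_dec x 0); lra. Qed.
Lemma rpow_0 c : rpow 0 c = 0.
Proof. unfold rpow; destruct (Rle_dec 0 0); lra. Qed.
Lemma rpow_1 c : rpow 1 c = 1.
Proof. rewrite rpow_pos by lra. unfold Rpower. rewrite ln_1, Rmult_0_r, exp_0; auto. Qed.
Lemma rpow_ge0 x c : 0 <= rpow x c.
Proof. unfold rpow; destruct (Rle_dec x 0). lra. unfold Rpower; left; apply exp_pos. Qed.
Lemma rpow_gt0 x c : 0 < x -> 0 < rpow x c.
Proof. intros; rewrite rpow_pos; auto; unfold Rpower; apply exp_pos. Qed.
Lemma rpow_id t : I01 t -> rpow t 1 = t.
Proof.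
intros [H1 H2]. destruct (Req_dec t 0). subst; apply rpow_0.
rewrite rpow_pos by lra. apply Rpower_1; lra.
Qed.

Lemma near_pos x : 0 < x -> exists d, 0 < d /\ forall t, I01 t -> Rabs (t - x) < d -> 0 < t.
Proof.
intros Hx; exists x; split; auto. intros t _ H. apply Rabs_def2 in H. lra.
Qed.

Lemma rpow_cont c : 0 < c -> cont1 (fun t => rpow t c).
Proof.
intros Hc x Ix. destruct (Req_dec x 0) as [->|Hx].
- rewrite rpow_0. apply filterlim_locally. intros eps.
  destruct (small_pow c Hc eps (cond_pos eps)) as (d & Hd & Hs).
  exists (mkposreal _ Hd). intros t Hb It. change R in t. apply ball_R in Hb. apply ball_R. change (Rabs (t - 0) < d) in Hb.
  rewrite Rminus_0_r in *. destruct (Req_dec t 0) as [->|Ht].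
  + rewrite rpow_0, Rabs_R0; apply cond_pos.
  + destruct It as [It1 It2]. rewrite rpow_pos by lra.
    rewrite Rabs_pos_eq by (unfold Rpower; left; apply exp_pos).
    apply Hs. split. lra. rewrite Rabs_pos_eq in Hb; lra.
- assert (Hx' : 0 < x) by (destruct Ix; lra).
  apply (cont_of_cont (fun t => Rpower t c) (fun t => rpow t c) x); auto.
  + apply (@ex_derive_continuous R_AbsRing R_NormedModule). exists (c * Rpower x (c - 1)).
    apply is_derive_Reals. apply derivable_pt_lim_power; auto.
  + destruct (near_pos x Hx') as (d & Hd & Hp). exists d; split; auto.
    intros t It Ht. apply rpow_pos. eapply Hp; eauto.
Qed.

Lemma rpow_deriv b x : 1 < b -> I01 x ->
  is_deriv_within I01 (fun t => rpow t b) x (b * rpow x (b - 1)).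
Proof.
intros Hb Ix. destruct (Req_dec x 0) as [->|Hx].
- rewrite rpow_0, Rmult_0_r. unfold is_deriv_within. apply filterlim_locally. intros eps.
  destruct (small_pow (b-1) ltac:(lra) eps (cond_pos eps)) as (d & Hd & Hs).
  exists (mkposreal _ Hd). intros t Hb' [[It1 It2] Ht]. change R in t. apply ball_R in Hb'. apply ball_R. change (Rabs (t - 0) < d) in Hb'.
  rewrite Rminus_0_r in *. rewrite rpow_0, rpow_pos by lra.
  replace (Rpower t b) with (Rpower t (b - 1) * t).
  2: { rewrite <- (Rpower_1 t) at 2 by lra. rewrite <- Rpower_plus. f_equal; ring. }
  replace ((Rpower t (b - 1) * t - 0) / (t - 0)) with (Rpower t (b-1)) by (field; lra).
  rewrite Rabs_pos_eq by (unfold Rpower; left; apply exp_pos).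
  apply Hs. rewrite Rabs_pos_eq in Hb'; lra.
- assert (Hx' : 0 < x) by (destruct Ix; lra).
  rewrite rpow_pos by auto.
  apply (deriv_of_dpl (fun t => Rpower t b) (fun t => rpow t b)); auto.
  apply derivable_pt_lim_power; auto.
  destruct (near_pos x Hx') as (d & Hd & Hp). exists d; split; auto.
  intros t It Ht. apply rpow_pos. eapply Hp; eauto.
Qed.

Lemma cont1_const c : cont1 (fun _ => c).
Proof. intros x _. apply filterlim_const. Qed.
Lemma cont1_scal k u : cont1 u -> cont1 (fun t => k * u t).
Proof. intros H x Ix. apply lim_mult. apply filterlim_const. apply H; auto. Qed.

Lemma deriv_eq D g x l l' : l = l' -> is_deriv_within D g x l -> is_deriv_within D g x l'.
Proof. intros ->; auto. Qed.

Lemma deriv_scal D k g x l : is_deriv_within D g x l ->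
  is_deriv_within D (fun t => k * g t) x (k * l).
Proof.
intros H. eapply deriv_eq. 2: apply (deriv_mult D (fun _ => k) g x 0 l (deriv_const D k x) H). ring.
Qed.

Lemma C2_rpow n : 2 <= n -> C2 (fun S _ => rpow S n).
Proof.
intros Hn.
assert (D1' : forall x, I01 x -> is_deriv_within I01 (fun t => rpow t n) x (n * rpow x (n - 1))).
{ intros; apply rpow_deriv; auto; lra. }
destruct (Req_dec n 2) as [E|E].
- apply C2_fst with (fun x => n * rpow x (n - 1)) (fun _ => n * 1); auto.
  apply rpow_cont; lra. apply cont1_scal, rpow_cont; lra. apply cont1_const.
  intros x Ix. apply deriv_scal. apply deriv_ext with (fun t => t).
  intros t It. rewrite E. replace (2 - 1) with 1 by ring. symmetry; apply rpow_id; auto.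
  auto. apply deriv_id.
- apply C2_fst with (fun x => n * rpow x (n - 1)) (fun x => n * ((n - 1) * rpow x (n - 1 - 1))); auto.
  apply rpow_cont; lra. apply cont1_scal, rpow_cont; lra.
  apply cont1_scal, cont1_scal, rpow_cont; lra.
  intros x Ix. apply deriv_scal. apply rpow_deriv; auto; lra.
Qed.

Lemma refl_filt x : filterlim (fun t => 1 - t) (within I01 (locally x)) (within I01 (locally (1 - x))).
Proof.
intros P [eps HP]. exists eps. intros t Hb It. apply HP.
apply ball_R; apply ball_R in Hb. replace (1 - t - (1 - x)) with (- (t - x)) by ring.
rewrite Rabs_Ropp; auto. destruct It; split; lra.
Qed.

Lemma refl_cont u : cont1 u -> cont1 (fun t => u (1 - t)).
Proof.
intros H x Ix. apply (filterlim_comp _ _ _ (fun t => 1 - t) u _ (within I01 (locally (1 - x)))).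
apply refl_filt. apply H. destruct Ix; split; lra.
Qed.

Lemma refl_deriv u x l : I01 x -> is_deriv_within I01 u (1 - x) l ->
  is_deriv_within I01 (fun t => u (1 - t)) x (-1 * l).
Proof.
intros Ix H. unfold is_deriv_within in *.
apply filterlim_ext_loc with (fun t => -1 * ((u (1 - t) - u (1 - x)) / ((1 - t) - (1 - x)))).
apply W_ev. intros t _ Ht. field. split; intro Z; apply Ht; lra.
apply lim_mult. apply filterlim_const.
apply (filterlim_comp _ _ _ (fun t => 1 - t) (fun s => (u s - u (1 - x)) / (s - (1 - x))) _ (W I01 (1 - x))); auto.
intros P [eps HP]. exists eps. intros t Hb [It Ht]. apply HP.
apply ball_R; apply ball_R in Hb. replace (1 - t - (1 - x)) with (- (t - x)) by ring.
rewrite Rabs_Ropp; auto. destruct It; split; [split|]; lra.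
Qed.

Lemma C2_fst_refl u u' u'' : cont1 u -> cont1 u' -> cont1 u'' ->
  (forall x, I01 x -> is_deriv_within I01 u x (u' x)) ->
  (forall x, I01 x -> is_deriv_within I01 u' x (u'' x)) ->
  C2 (fun S _ => u (1 - S)).
Proof.
intros H1 H2 H3 H4 H5.
apply C2_fst with (fun x => -1 * u' (1 - x)) (fun x => -1 * (-1 * u'' (1 - x))).
apply refl_cont; auto. apply cont1_scal, refl_cont; auto. apply cont1_scal, cont1_scal, refl_cont; auto.
intros x Ix. apply refl_deriv; auto. apply H4. destruct Ix; split; lra.
intros x Ix. apply deriv_scal. apply refl_deriv; auto. apply H5. destruct Ix; split; lra.
Qed.

Lemma C2_glob u u' u'' : (forall x, is_derive u x (u' x)) -> (forall x, is_derive u' x (u'' x)) ->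
  (forall x, continuous u'' x) -> C2 (fun S _ => u S).
Proof.
intros H1 H2 H3.
assert (E : forall g : R -> R, exists d, 0 < d /\ forall t, I01 t -> Rabs (t - 0) < d -> g t = g t).
{ intros; exists 1; split; auto; lra. }
apply C2_fst with u' u''.
- intros x Ix. apply (cont_of_cont u u x); auto.
  apply (@ex_derive_continuous R_AbsRing R_NormedModule). eexists; apply H1.
  exists 1; split; [lra|auto].
- intros x Ix. apply (cont_of_cont u' u' x); auto.
  apply (@ex_derive_continuous R_AbsRing R_NormedModule). eexists; apply H2.
  exists 1; split; [lra|auto].
- intros x Ix. apply (cont_of_cont u'' u'' x); auto. exists 1; split; [lra|auto].
- intros x Ix. apply (deriv_of_dpl u u x); auto. apply is_derive_Reals; auto. exists 1; split; [lra|auto].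
- intros x Ix. apply (deriv_of_dpl u' u' x); auto. apply is_derive_Reals; auto. exists 1; split; [lra|auto].
Qed.

Definition yF epdry fmdry Swc Sgr S := epdry * (Sw Swc Sgr S - fmdry).
Definition F2d epdry fmdry Swc Sgr S :=
  / PI * (epdry * (1 - Swc - Sgr) * / (1 + yF epdry fmdry Swc Sgr S ^ 2)).
Definition F2dd epdry fmdry Swc Sgr S :=
  / PI * (epdry * (1 - Swc - Sgr) * (- (2 * (epdry * (1 - Swc - Sgr)) * yF epdry fmdry Swc Sgr S)
    * / (1 + yF epdry fmdry Swc Sgr S ^ 2) ^ 2)).

Lemma F2_derive epdry fmdry Swc Sgr (x : R) :
  is_derive (F2 epdry fmdry Swc Sgr) x (F2d epdry fmdry Swc Sgr x).
Proof.
unfold F2, F2d.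
assert (Hy : is_derive (yF epdry fmdry Swc Sgr) x (epdry * (1 - Swc - Sgr))).
{ unfold yF, Sw. auto_derive; auto; ring. }
assert (Ha : is_derive atan (yF epdry fmdry Swc Sgr x) (/ (1 + yF epdry fmdry Swc Sgr x ^ 2))).
{ apply is_derive_Reals, derivable_pt_lim_atan. }
pose proof (is_derive_comp _ _ _ _ _ Ha Hy) as Hc.
pose proof (is_derive_scal _ _ (/ PI) _ Hc) as Hs.
pose proof (is_derive_plus (fun _ => / 2) _ x 0 _ (is_derive_const (/2) x) Hs) as Hp.
simpl in Hp. unfold plus, scal in Hp; simpl in Hp. unfold mult in Hp; simpl in Hp.
replace (/ PI * (epdry * (1 - Swc - Sgr) * / (1 + yF epdry fmdry Swc Sgr x ^ 2)))
  with (0 + / PI * (epdry * (1 - Swc - Sgr) * / (1 + yF epdry fmdry Swc Sgr x ^ 2))) by ring.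
exact Hp.
Qed.

Lemma F2d_derive epdry fmdry Swc Sgr (x : R) :
  is_derive (F2d epdry fmdry Swc Sgr) x (F2dd epdry fmdry Swc Sgr x).
Proof.
unfold F2d, F2dd, yF, Sw. unfold Rminus. auto_derive.
all: generalize (epdry * (Swc + x * (1 + - Swc + - Sgr) + - fmdry)); intro z.
all: try (field; split; [apply Rgt_not_eq; nra|apply PI_neq0]).
all: try (apply Rgt_not_eq; nra).
Qed.

Lemma F2dd_cont epdry fmdry Swc Sgr (x : R) : continuous (F2dd epdry fmdry Swc Sgr) x.
Proof.
apply (@ex_derive_continuous R_AbsRing R_NormedModule).
unfold F2dd, yF, Sw. unfold Rminus. auto_derive.
all: generalize (epdry * (Swc + x * (1 + - Swc + - Sgr) + - fmdry)); intro z.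
all: try (apply Rgt_not_eq; nra).
Qed.

Lemma C2_F2 epdry fmdry Swc Sgr : C2 (fun S _ => F2 epdry fmdry Swc Sgr S).
Proof.
apply C2_glob with (F2d epdry fmdry Swc Sgr) (F2dd epdry fmdry Swc Sgr).
apply F2_derive. apply F2d_derive. apply F2dd_cont.
Qed.

Lemma C2_rpow_refl n : 2 <= n -> C2 (fun S _ => rpow (1 - S) n).
Proof.
intros Hn.
destruct (Req_dec n 2) as [E|E].
- apply (C2_fst_refl (fun s => rpow s n)) with (fun x => n * rpow x (n - 1)) (fun _ => n * 1); auto.
  apply rpow_cont; lra. apply cont1_scal, rpow_cont; lra. apply cont1_const.
  intros; apply rpow_deriv; auto; lra.
  intros x Ix. apply deriv_scal. apply deriv_ext with (fun t => t).
  intros t It. rewrite E. replace (2 - 1) with 1 by ring. symmetry; apply rpow_id; auto.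
  auto. apply deriv_id.
- apply (C2_fst_refl (fun s => rpow s n)) with (fun x => n * rpow x (n - 1)) (fun x => n * ((n - 1) * rpow x (n - 1 - 1))); auto.
  apply rpow_cont; lra. apply cont1_scal, rpow_cont; lra.
  apply cont1_scal, cont1_scal, rpow_cont; lra.
  intros; apply rpow_deriv; auto; lra.
  intros x Ix. apply deriv_scal. apply rpow_deriv; auto; lra.
Qed.

Lemma F2_pos epdry fmdry Swc Sgr S : 0 < F2 epdry fmdry Swc Sgr S.
Proof.
unfold F2. destruct (atan_bound (epdry * (Sw Swc Sgr S - fmdry))) as [H1 _].
pose proof PI_RGT_0.
assert (/ PI * (- PI / 2) < / PI * atan (epdry * (Sw Swc Sgr S - fmdry))).
{ apply Rmult_lt_compat_l; auto. apply Rinv_0_lt_compat; auto. }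
replace (/ PI * (- PI / 2)) with (- / 2) in H0 by (field; lra). lra.
Qed.

Lemma F2d_pos epdry fmdry Swc Sgr S : 0 < epdry -> Swc + Sgr < 1 -> 0 < F2d epdry fmdry Swc Sgr S.
Proof.
intros He Hs. unfold F2d. pose proof PI_RGT_0.
apply Rmult_lt_0_compat. apply Rinv_0_lt_compat; auto.
apply Rmult_lt_0_compat. apply Rmult_lt_0_compat; lra.
apply Rinv_0_lt_compat. pose proof (pow2_ge_0 (yF epdry fmdry Swc Sgr S)). lra.
Qed.

Lemma F2_deriv_within epdry fmdry Swc Sgr S : I01 S ->
  is_deriv_within I01 (F2 epdry fmdry Swc Sgr) S (F2d epdry fmdry Swc Sgr S).
Proof.
intros. apply (deriv_of_dpl (F2 epdry fmdry Swc Sgr)); auto.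
apply is_derive_Reals, F2_derive. exists 1; split; auto; lra.
Qed.

Theorem mainTheorem7
  (krw0 krg0 muw mug fmmob epdry nw ng Swc Sgr fmdry : R)
  (Hkrw0 : 0 < krw0) (Hkrg0 : 0 < krg0) (Hmuw : 0 < muw) (Hmug : 0 < mug)
  (Hfmmob : 0 < fmmob) (Hepdry : 0 < epdry)
  (Hnw : 2 <= nw) (Hng : 2 <= ng)
  (HSwc : 0 <= Swc) (HSgr : 0 <= Sgr) (Hsum : Swc + Sgr < 1) :
  let f := fracflow krw0 krg0 muw mug nw ng fmmob epdry fmdry Swc Sgr in
  C2_on_unit_square f /\
  (forall C, I01 C ->
     f 0 C = 0 /\ f 1 C = 1 /\ dS f 0 C 0 /\ dS f 1 C 0) /\
  (forall S C, 0 < S < 1 -> I01 C ->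
     (exists l, dS f S C l /\ 0 < l) /\ (exists l, dC f S C l /\ 0 < l)).
Proof.
intros f.
set (c := muw / mug).
assert (Hc : 0 < c) by (unfold c; apply Rdiv_lt_0_compat; auto).
set (F := F2 epdry fmdry Swc Sgr).
set (Fd := F2d epdry fmdry Swc Sgr).
assert (HF : forall S, 0 < F S) by (intros; apply F2_pos).
assert (HFd : forall S, 0 < Fd S) by (intros; apply F2d_pos; auto).
set (E := fun S C => 1 + fmmob * C * F S).
assert (HE : forall S C, I01 C -> 0 < E S C).
{ intros S C [HC _]. unfold E. pose proof (HF S).
  assert (0 <= fmmob * C * F S) by (apply Rmult_le_pos; [apply Rmult_le_pos|]; lra). lra. }
set (N := fun S => krw krw0 nw S).
set (G := fun S => krg krg0 ng S).
assert (HN0 : forall S, 0 <= N S) by (intros; unfold N, krw; apply Rmult_le_pos; [lra|apply rpow_ge0]).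
assert (HG0 : forall S, 0 <= G S) by (intros; unfold G, krg; apply Rmult_le_pos; [lra|apply rpow_ge0]).
assert (HN : forall S, 0 < S -> 0 < N S) by (intros; unfold N, krw; apply Rmult_lt_0_compat; [lra|apply rpow_gt0; auto]).
assert (HG : forall S, S < 1 -> 0 < G S) by (intros; unfold G, krg; apply Rmult_lt_0_compat; [lra|apply rpow_gt0; lra]).
set (K := fun S C => G S * / E S C).
set (Den := fun S C => N S + c * K S C).
assert (HK0 : forall S C, I01 C -> 0 <= K S C).
{ intros. unfold K. apply Rmult_le_pos; auto. left; apply Rinv_0_lt_compat; auto. }
assert (HD : forall S C, I01 S -> I01 C -> 0 < Den S C).
{ intros S C [HS1 HS2] HC. unfold Den. destruct (Req_dec S 0) as [->|HS].
  - assert (0 < K 0 C). { unfold K. apply Rmult_lt_0_compat. apply HG; lra. apply Rinv_0_lt_compat; auto. }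
    pose proof (HN0 0). assert (0 < c * K 0 C) by (apply Rmult_lt_0_compat; auto). lra.
  - assert (0 < N S) by (apply HN; lra). pose proof (HK0 S C HC).
    assert (0 <= c * K S C) by (apply Rmult_le_pos; lra). lra. }
assert (Ef : forall S C, f S C = N S * / Den S C) by reflexivity.
set (Nd := fun S => krw0 * (nw * rpow S (nw - 1))).
set (Gd := fun S => krg0 * (-1 * (ng * rpow (1 - S) (ng - 1)))).
set (Ed := fun S C => fmmob * C * Fd S).
set (Kd := fun S C => Gd S * / E S C + G S * (- Ed S C * / (E S C * E S C))).
set (fd := fun S C => Nd S * / Den S C + N S * (- (Nd S + c * Kd S C) * / (Den S C * Den S C))).
assert (HdS : forall S C, I01 S -> I01 C -> dS f S C (fd S C)).
{ intros S C HS HC. unfold dS.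
  change (is_deriv_within I01 (fun t => N t * / Den t C) S (fd S C)).
  apply (deriv_mult I01 N (fun t => / Den t C)).
  - unfold N, krw, Nd. apply deriv_scal. apply rpow_deriv; auto; lra.
  - apply (deriv_inv I01 (fun t => Den t C)). intros t Ht; apply Rgt_not_eq, HD; auto. auto.
    apply (deriv_plus I01 N (fun t => c * K t C)).
    + unfold N, krw, Nd. apply deriv_scal. apply rpow_deriv; auto; lra.
    + apply deriv_scal. apply (deriv_mult I01 G (fun t => / E t C)).
      * unfold G, krg, Gd. apply deriv_scal.
        apply (refl_deriv (fun s => rpow s ng)); auto. apply rpow_deriv; [lra|destruct HS; split; lra].
      * apply (deriv_inv I01 (fun t => E t C)). intros t Ht; apply Rgt_not_eq, HE; auto. auto.
        eapply deriv_eq. 2: { apply (deriv_plus I01 (fun _ => 1) (fun t => fmmob * C * F t)).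
          apply deriv_const. apply deriv_scal. apply F2_deriv_within; auto. }
        unfold Ed, Fd; cbv beta; ring. }
set (fdC := fun S C => N S * (- (c * (G S * (- (fmmob * F S) * / (E S C * E S C)))) * / (Den S C * Den S C))).
assert (HdC : forall S C, I01 S -> I01 C -> dC f S C (fdC S C)).
{ intros S C HS HC. unfold dC.
  change (is_deriv_within I01 (fun t => N S * / Den S t) C (fdC S C)).
  eapply deriv_eq. 2: { apply (deriv_mult I01 (fun _ => N S) (fun t => / Den S t)).
    apply deriv_const.
    apply (deriv_inv I01 (fun t => Den S t)). intros t Ht; apply Rgt_not_eq, HD; auto. auto.
    apply (deriv_plus I01 (fun _ => N S) (fun t => c * K S t)). apply deriv_const.
    apply deriv_scal. apply (deriv_mult I01 (fun _ => G S) (fun t => / E S t)). apply deriv_const.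
    apply (deriv_inv I01 (fun t => E S t)). intros t Ht; apply Rgt_not_eq, HE; auto. auto.
    apply (deriv_plus I01 (fun _ => 1) (fun t => fmmob * t * F S)). apply deriv_const.
    apply (deriv_mult I01 (fun t => fmmob * t) (fun _ => F S)).
    apply deriv_scal. apply deriv_id. apply deriv_const. }
  unfold fdC; cbv beta; ring. }
split; [|split].
-
  apply C2_ok.
  pose proof (C2_mult _ _ (C2_const krw0) (C2_rpow nw Hnw)) as CN.
  pose proof (C2_mult _ _ (C2_const krg0) (C2_rpow_refl ng Hng)) as CG.
  pose proof (C2_plus _ _ (C2_const 1) (C2_mult _ _ (C2_mult _ _ (C2_const fmmob) C2_snd)
     (C2_F2 epdry fmdry Swc Sgr))) as CE.
  assert (CEi : C2 (fun S C => / E S C)).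
  { refine (C2_inv _ CE _). intros S C HS HC; cbv beta. apply Rgt_not_eq, HE; auto. }
  pose proof (C2_mult _ _ CG CEi) as CK.
  pose proof (C2_plus _ _ CN (C2_mult _ _ (C2_const c) CK)) as CD.
  assert (CDi : C2 (fun S C => / Den S C)).
  { refine (C2_inv _ CD _). intros S C HS HC; cbv beta. apply Rgt_not_eq, HD; auto. }
  exact (C2_mult _ _ CN CDi).
- intros C HC.
  assert (N0 : N 0 = 0) by (unfold N, krw; rewrite rpow_0; ring).
  assert (N1 : N 1 = krw0) by (unfold N, krw; rewrite rpow_1; ring).
  assert (G1 : G 1 = 0) by (unfold G, krg; replace (1 - 1) with 0 by ring; rewrite rpow_0; ring).
  assert (I0 : I01 0) by (split; lra). assert (I1 : I01 1) by (split; lra).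
  assert (D1p : 0 < Den 1 C) by (apply HD; auto).
  assert (D1e : Den 1 C = krw0) by (unfold Den, K; rewrite N1, G1; ring).
  split; [|split; [|split]].
  + rewrite Ef, N0. ring.
  + rewrite Ef, D1e, N1. field. lra.
  + eapply deriv_eq. 2: apply HdS; auto. unfold fd, Nd. rewrite N0, rpow_0. ring.
  + eapply deriv_eq. 2: apply HdS; auto. unfold fd, Kd, Gd, K in *. rewrite N1, G1 in *.
    unfold fd; cbv beta. replace (1 - 1) with 0 by ring. rewrite rpow_0, D1e. field. split. lra. apply Rgt_not_eq, HE; auto.
- intros S C HS HC. assert (IS : I01 S) by (split; lra). split.
  + exists (fd S C). split. apply HdS; auto.
    pose proof (HD S C IS HC) as Hden.
    assert (Ee : fd S C = c * (Nd S * K S C - N S * Kd S C) * / (Den S C * Den S C)).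
    { unfold fd, Den in *; cbv beta in *. field. lra. }
    rewrite Ee.
    assert (HNd : 0 < Nd S).
    { unfold Nd. apply Rmult_lt_0_compat; auto. apply Rmult_lt_0_compat. lra. apply rpow_gt0; lra. }
    assert (HGd : Gd S < 0).
    { unfold Gd. assert (0 < krg0 * (ng * rpow (1 - S) (ng - 1))).
      { apply Rmult_lt_0_compat; auto. apply Rmult_lt_0_compat. lra. apply rpow_gt0; lra. } lra. }
    assert (HEi : 0 < / E S C) by (apply Rinv_0_lt_compat; auto).
    assert (HEEi : 0 < / (E S C * E S C)) by (apply Rinv_0_lt_compat, Rmult_lt_0_compat; auto).
    assert (HEd : 0 <= Ed S C).
    { unfold Ed. apply Rmult_le_pos. apply Rmult_le_pos; destruct HC; lra. left; auto. }
    assert (HGS : 0 < G S) by (apply HG; lra).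
    assert (HNS : 0 < N S) by (apply HN; lra).
    assert (HKd : Kd S C < 0).
    { unfold Kd. assert (Gd S * / E S C < 0).
      { rewrite <- (Rmult_0_l (/ E S C)). apply Rmult_lt_compat_r; auto. }
      assert (0 <= G S * (Ed S C * / (E S C * E S C))).
      { apply Rmult_le_pos; [lra|]. apply Rmult_le_pos; lra. }
      replace (G S * (- Ed S C * / (E S C * E S C))) with (- (G S * (Ed S C * / (E S C * E S C)))) by ring.
      lra. }
    assert (HKS : 0 < K S C) by (unfold K; apply Rmult_lt_0_compat; auto).
    apply Rmult_lt_0_compat. apply Rmult_lt_0_compat; auto.
    assert (0 < Nd S * K S C) by (apply Rmult_lt_0_compat; auto).
    assert (N S * Kd S C < 0).
    { rewrite <- (Rmult_0_r (N S)). apply Rmult_lt_compat_l; auto. } lra.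
    apply Rinv_0_lt_compat, Rmult_lt_0_compat; auto.
  + exists (fdC S C). split. apply HdC; auto.
    assert (Ee : fdC S C = N S * c * G S * fmmob * F S * / (E S C * E S C) * / (Den S C * Den S C)).
    { unfold fdC; cbv beta. ring. }
    rewrite Ee. pose proof (HD S C IS HC).
    apply Rmult_lt_0_compat; [|apply Rinv_0_lt_compat, Rmult_lt_0_compat; auto].
    apply Rmult_lt_0_compat; [|apply Rinv_0_lt_compat, Rmult_lt_0_compat; auto].
    apply Rmult_lt_0_compat; [|apply HF].
    apply Rmult_lt_0_compat; [|lra].
    apply Rmult_lt_0_compat; [|apply HG; lra].
    apply Rmult_lt_0_compat; [apply HN; lra|lra].
Qed.
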